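(* Let $t=\alpha^\mu\beta^\nu$ with $\mu\in\mathbb{Z}_{\ge0}^m$, $\nu\in\mathbb{Z}_{\ge0}^n$. If $t$ has a syl-representation, then $t$ has a res-representation.
   Context: For $M\in\{0,1\}^{m\times n}$: $\bar M_{ij}=1-M_{ij}$; $rs(M)=(\sum_j M_{ij})_i$; $cs(M)=(\sum_i M_{ij})_j$; $ars(M)=(i+\sum_j M_{ij})_{i=1..m}$; $acs(M)=(j+\sum_i M_{ij})_{j=1..n}$. A res-representation of $\alpha^\mu\beta^\nu$ is $\mathcal{R}\in\{0,1\}^{m\times n}$ with $rs(\mathcal{R})=\mu$ and $cs(\bar{\mathcal{R}})=\nu$. $PC(A,B)$ means $\{acs(A)_1,\dots,acs(A)_n,ars(B)_1,\dots,ars(B)_m\}=\{1,\dots,m+n\}$. A syl-representation of $\alpha^\mu\beta^\nu$ is a pair $(\mathcal{S}_1,\mathcal{S}_2)$ in $\{0,1\}^{m\times n}$ with $rs(\mathcal{S}_1)=\mu$, $cs(\mathcal{S}_2)=\nu$, $PC(\mathcal{S}_1,\mathcal{S}_2)$. *)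

(* Defs.v *)
From mathcomp Require Import all_boot all_order all_algebra.
Set Implicit Arguments. Unset Strict Implicit. Unset Printing Implicit Defensive.

(* 0/1 matrices are boolean matrices; entries counted as naturals (true = 1). *)
Definition bmx (m n : nat) := 'M[bool]_(m, n).

Definition compl_mx m n (M : bmx m n) : bmx m n := map_mx negb M.

Definition rs m n (M : bmx m n) (i : 'I_m) : nat := \sum_(j < n) nat_of_bool (M i j).
Definition cs m n (M : bmx m n) (j : 'I_n) : nat := \sum_(i < m) nat_of_bool (M i j).

(* 1-based indices: row i (0-based ordinal) is row i.+1 in the paper *)
Definition ars m n (M : bmx m n) (i : 'I_m) : nat := i.+1 + rs M i.
Definition acs m n (M : bmx m n) (j : 'I_n) : nat := j.+1 + cs M j.

Definition PC m n (A B : bmx m n) : Prop :=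
  forall k : nat,
    (k \in [seq acs A j | j <- enum 'I_n] ++ [seq ars B i | i <- enum 'I_m])
    = (1 <= k <= m + n).

Definition res_rep m n (mu : 'I_m -> nat) (nu : 'I_n -> nat) (R : bmx m n) : Prop :=
  (forall i, rs R i = mu i) /\ (forall j, cs (compl_mx R) j = nu j).

Definition syl_rep m n (mu : 'I_m -> nat) (nu : 'I_n -> nat) (S1 S2 : bmx m n) : Prop :=
  (forall i, rs S1 i = mu i) /\ (forall j, cs S2 j = nu j) /\ PC S1 S2.

(* Main.v *)
Require Import Defs.
From mathcomp Require Import all_boot all_order all_algebra.
From mathcomp Require Import zify.
Set Implicit Arguments. Unset Strict Implicit. Unset Printing Implicit Defensive.


Lemma topset m (mu : 'I_m -> nat) k : k <= m -> exists S : {set 'I_m},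
  #|S| = k /\ forall i i', i \in S -> i' \notin S -> mu i' <= mu i.
Proof.
elim: k => [|k IH] Hk.
  by exists set0; split; [rewrite cards0 | move=> i i'; rewrite in_set0].
have [S [HS Hm]] := IH (ltnW Hk).
have : 0 < #|~: S| by move: (cardsC S); rewrite card_ord; lia.
rewrite card_gt0 => /set0Pn [i0 Hi0].
case: (arg_maxnP mu Hi0) => x Hx Hmax.
have Hx' : x \notin S by rewrite -in_setC.
exists (x |: S); split.
  by rewrite cardsU1 HS Hx' addnC addn1.
move=> i i'; rewrite !in_setU1 negb_or => /orP [/eqP -> | iS] /andP [ne i'S].
  have : i' \in ~: S by rewrite in_setC.
  by move=> h; exact: (Hmax i' h).
exact: Hm.
Qed.

Lemma sum_ind (T : finType) (A : {set T}) : \sum_i ((i \in A) : nat) = #|A|.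
Proof.
rewrite -sum1_card [RHS]big_mkcond /=; apply: eq_bigr => i _.
by case: (i \in A).
Qed.

Lemma GR n : forall m (mu : 'I_m -> nat) (ka : 'I_n -> nat),
  \sum_i mu i = \sum_j ka j ->
  (forall J : {set 'I_n}, \sum_i (mu i - (n - #|J|)) <= \sum_(j in J) ka j) ->
  exists R : bmx m n, (forall i, rs R i = mu i) /\ (forall j, cs R j = ka j).
Proof.
elim: n => [|n IH] m mu ka Hsum HJ.
  exists (\matrix_(i,j) false)%R; split; last by case.
  move=> i; rewrite /rs big_ord0.
  have : \sum_i mu i == 0 by rewrite Hsum big_ord0.
  by rewrite sum_nat_eq0 => /forallP/(_ i)/eqP.
set k := ka ord0.
set ka' := fun j : 'I_n => ka (lift ord0 j).
have Hsplit : \sum_j ka j = k + \sum_j ka' j by rewrite big_ord_recl.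
have Hk : k <= #|[set i | 0 < mu i]|.
  have := HJ [set~ ord0].
  rewrite cardsC1 card_ord /= subSnn.
  have -> : \sum_(j in [set~ ord0]) ka j = \sum_j ka j - k.
    rewrite [in RHS](bigD1 ord0) //= /k addnC addnK; apply: eq_bigl => j.
    by rewrite !inE.
  have Hk0 : k <= \sum_j ka j by rewrite Hsplit leq_addr.
  move: Hk0; rewrite -Hsum.
  have -> : \sum_(i < m) mu i = \sum_(i < m) (mu i - 1) + #|[set i | 0 < mu i]|.
    rewrite -sum_ind -big_split /=; apply: eq_bigr => i _; rewrite inE; case: (mu i) => //= x; lia.
  have aux : forall a c k : nat, k <= a + c -> a <= a + c - k -> k <= c by move=> *; lia.
  by move=> h1 h2; exact: (aux _ _ _ h1 h2).
have Hkm : k <= m by apply: (leq_trans Hk); apply: leq_trans (max_card _) _; rewrite card_ord.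
have [S [HS Hm]] := topset mu Hkm.
have Spos : forall i, i \in S -> 0 < mu i.
  move=> i iS; rewrite lt0n; apply/negP => /eqP mi0.
  have : #|[set i | 0 < mu i]| <= #|S :\ i|.
    apply: subset_leq_card; apply/subsetP => i'; rewrite !inE => pi'.
    have ne : i' != i by apply/eqP => e; move: pi'; rewrite e mi0.
    rewrite ne /=; case: (boolP (i' \in S)) => // i'S.
    by have := Hm i i' iS i'S; rewrite mi0 leqn0 => /eqP e; rewrite e in pi'.
  move: HS; rewrite (cardsD1 i S) iS; lia.
set mu' := fun i => mu i - (i \in S).
have Hmu : forall i, mu i = mu' i + (i \in S).
  move=> i; rewrite /mu'; case: (boolP (i \in S)) => iS /=; last by rewrite !subn0 addn0.
  by have := Spos i iS; lia.
have Hsum' : \sum_i mu i = \sum_i mu' i + k.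
  by rewrite -HS -sum_ind -big_split /=; apply: eq_bigr => i _; exact: Hmu.
have [R' [HR1 HR2]] : exists R' : bmx m n,
    (forall i, rs R' i = mu' i) /\ (forall j, cs R' j = ka' j).
  apply: IH.
    by move: Hsum; rewrite Hsplit Hsum'; lia.
  move=> J'.
  have cJ' : #|J'| <= n by apply: leq_trans (max_card _) _; rewrite card_ord.
  set J1 := [set lift ord0 j | j in J'].
  have cJ1 : #|J1| = #|J'| by rewrite card_imset //; exact: lift_inj.
  have sJ1 : \sum_(j in J1) ka j = \sum_(j in J') ka' j.
    by rewrite big_imset //; apply: in2W; exact: lift_inj.
  have n0 : ord0 \notin J1.
    by apply/imsetP => [[j _ e]]; move: (neq_lift ord0 j); rewrite -e eqxx.
  have H1 := HJ J1; rewrite cJ1 sJ1 in H1.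
  have H2 := HJ (ord0 |: J1).
  rewrite big_setU1 //= cardsU1 n0 cJ1 sJ1 add1n subSS in H2.
  rewrite subSn // in H1.
  set d := n - #|J'| in H1 H2 *.
  case: (boolP [exists i0, (i0 \notin S) && (d < mu i0)]).
    case/existsP => i0 /andP [i0S lt0].
    have E : \sum_i (mu' i - d) + k = \sum_i (mu i - d).
      rewrite -HS -sum_ind -big_split /=; apply: eq_bigr => i _.
      case: (boolP (i \in S)) => iS /=; last by rewrite addn0 /mu' (negbTE iS) subn0.
      have := Hm i i0 iS i0S; rewrite /mu' iS; lia.
    move: H2; rewrite -E /k; lia.
  rewrite negb_exists => /forallP Hall.
  apply: leq_trans H1; apply: leq_sum => i _.
  rewrite /mu'; case: (boolP (i \in S)) => iS /=; first by lia.
  by have := Hall i; rewrite iS /= -leqNgt => h; rewrite subn0; lia.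
exists (\matrix_(i, j) match unlift ord0 j with Some j' => R' i j' | None => i \in S end)%R.
split.
  move=> i; rewrite /rs big_ord_recl mxE unlift_none Hmu -HR1 /rs addnC; congr (_ + _).
  by apply: eq_bigr => j _; rewrite mxE liftK.
move=> j; rewrite /cs; case: (unliftP ord0 j) => [j'|] ->.
  by have := HR2 j'; rewrite /cs /ka' => <-; apply: eq_bigr => i _; rewrite mxE liftK.
by rewrite /ka' -/k -HS -sum_ind; apply: eq_bigr => i _; rewrite mxE unlift_none.
Qed.


Definition tri k := \sum_(i < k) i.+1.

Lemma triS k : tri k.+1 = tri k + k.+1.
Proof. by rewrite /tri big_ord_recr. Qed.

Lemma triD p q : tri (p + q) = tri p + tri q + p * q.
Proof.
elim: q => [|q IH]; first by rewrite addn0 /tri big_ord0 muln0 !addn0.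
rewrite addnS !triS IH mulnS; lia.
Qed.

Lemma sum_iota v : \sum_(x <- iota 1 v) x = tri v.
Proof.
elim: v => [|v IH]; first by rewrite big_nil /tri big_ord0.
by rewrite -[v.+1]addn1 iotaD big_cat /= big_seq1 IH addn1 triS add1n.
Qed.

Lemma filter_iota v N : v <= N -> [seq x <- iota 1 N | x <= v] = iota 1 v.
Proof.
move=> H; rewrite -(subnKC H) iotaD filter_cat.
have -> : [seq x <- iota 1 v | x <= v] = iota 1 v.
  by apply/all_filterP/allP => x; rewrite mem_iota; lia.
have -> : [seq x <- iota (1 + v) (N - v) | x <= v] = [::].
  rewrite (@eq_in_filter _ _ pred0) ?filter_pred0 // => x; rewrite mem_iota /=; lia.
by rewrite cats0.
Qed.

Lemma ivt (f : nat -> nat) N q : f 0 = 0 -> q <= f N ->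
  (forall v, v < N -> f v.+1 <= (f v).+1) -> exists2 v, v <= N & f v = q.
Proof.
move=> f0; elim: N => [|N IH] HqN Hs.
  by exists 0 => //; move: HqN; rewrite f0 leqn0 => /eqP.
case: (leqP q (f N)) => h.
  by case: (IH h (fun v hv => Hs v (ltnW hv))) => v hv e; exists v => //; lia.
exists N.+1 => //; have := Hs N (ltnSn N); lia.
Qed.

Lemma sum_distinct n (L : {set 'I_n}) : tri #|L| <= \sum_(j in L) j.+1.
Proof.
move: {2}#|L| (erefl #|L|) => k; elim: k L => [|k IH] L Hk.
  by rewrite Hk /tri big_ord0.
have : 0 < #|L| by rewrite Hk.
rewrite card_gt0 => /set0Pn [i0 Hi0].
case: (arg_maxnP (fun j : 'I_n => (j : nat)) Hi0) => x Hx Hmax.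
have Hx' : x \in L := Hx.
rewrite (big_setD1 x Hx') /=.
have Hk' : #|L :\ x| = k by move: Hk; rewrite (cardsD1 x L) Hx' add1n => -[].
have := IH _ Hk'.
have Hx2 : #|L| <= x.+1.
  have <- : #|[set (inord (val j) : 'I_x.+1) | j in L]| = #|L|.
    apply: card_in_imset => j1 j2 h1 h2 e.
    have := Hmax j1 h1; have := Hmax j2 h2.
    move=> l2 l1; apply: val_inj; idtac.
    by move: (congr1 (@nat_of_ord _) e); rewrite !inordK ?ltnS.
  by apply: leq_trans (max_card _) _; rewrite card_ord.
rewrite Hk' Hk triS in Hx2 *; move=> h; rewrite addnC; exact: leq_add.
Qed.


Lemma sumv (m n : nat) (S1 S2 : bmx m n) : PC S1 S2 -> forall v, v <= m + n ->
  \sum_(j | acs S1 j <= v) acs S1 j + \sum_(i | ars S2 i <= v) ars S2 i = tri v /\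
  #|[set j | acs S1 j <= v]| + #|[set i | ars S2 i <= v]| = v.
Proof.
rewrite /PC => HPC v Hv.
set Lst := [seq acs S1 j | j <- enum 'I_n] ++ [seq ars S2 i | i <- enum 'I_m].
have Hmem : iota 1 (m+n) =i Lst by move=> k; rewrite HPC mem_iota add1n ltnS.
have Hu : uniq Lst.
  by rewrite (uniq_size_uniq (iota_uniq 1 (m+n)) Hmem) size_cat !size_map -!enumT -!cardT !card_ord size_iota addnC.
have Hp : perm_eq Lst (iota 1 (m+n)) := uniq_perm Hu (iota_uniq _ _) (fun k => esym (Hmem k)).
split.
  have E : \sum_(x <- Lst | x <= v) x = tri v.
    by rewrite (perm_big _ Hp) -big_filter filter_iota // sum_iota.
  rewrite -E big_cat !big_map -!enumT !big_enum_cond /=.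
  congr (_ + _); apply: eq_bigl => j; by rewrite inE.
have E : \sum_(x <- Lst | x <= v) 1 = v.
  by rewrite (perm_big _ Hp) -big_filter filter_iota // sum1_size size_iota.
rewrite -!sum1_card -[RHS]E big_cat !big_map -!enumT !big_enum_cond.
congr (_ + _); apply: eq_bigl => j; by rewrite !inE.
Qed.


Lemma sum1_ord k : \sum_(i < k) 1 = k.
Proof. by rewrite sum1_card card_ord. Qed.

Lemma sum_in_le (T : finType) (A : {set T}) (F : T -> nat) :
  \sum_(i in A) F i <= \sum_i F i.
Proof. by rewrite big_mkcond /=; apply: leq_sum => i _; case: (i \in A). Qed.

Lemma sum_b_set (T : finType) (A : {set T}) (f : T -> bool) :
  \sum_(i in A) (f i : nat) + \sum_(i in A) (~~ f i : nat) = #|A|.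
Proof.
by rewrite -big_split /= -sum1_card; apply: eq_bigr => i _; case: (f i).
Qed.

Lemma sum_b_all k (f : 'I_k -> bool) :
  \sum_i (f i : nat) + \sum_i (~~ f i : nat) = k.
Proof.
by rewrite -big_split /= -[RHS]sum1_ord; apply: eq_bigr => i _; case: (f i).
Qed.

Lemma acs_bound m n (S1 S2 : bmx m n) : PC S1 S2 -> forall j, acs S1 j <= m + n.
Proof.
rewrite /PC => H j; have := H (acs S1 j).
by rewrite mem_cat map_f ?mem_enum //= => /esym/andP [_ ->].
Qed.

Lemma ars_bound m n (S1 S2 : bmx m n) : PC S1 S2 -> forall i, ars S2 i <= m + n.
Proof.
rewrite /PC => H i; have := H (ars S2 i).
by rewrite mem_cat [X in _ || X]map_f ?mem_enum ?orbT //= => /esym/andP [_ ->].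
Qed.


Lemma cond m n (mu : 'I_m -> nat) (nu : 'I_n -> nat) (S1 S2 : bmx m n) :
  syl_rep mu nu S1 S2 ->
  \sum_i mu i = \sum_j (m - nu j) /\
  forall J : {set 'I_n}, \sum_i (mu i - (n - #|J|)) <= \sum_(j in J) (m - nu j).
Proof.
case=> Hmu [Hnu HPC].
have aux : forall a b c : nat, a + b = c -> c - a = b by move=> *; lia.
have Hcomp : forall j, m - nu j = \sum_i (~~ S2 i j : nat).
  by move=> j; rewrite -Hnu /cs; apply: aux; exact: (sum_b_all (fun i => S2 i j)).
have Hrow : forall i, n - rs S2 i = \sum_j (~~ S2 i j : nat).
  by move=> i; rewrite /rs; apply: aux; exact: (sum_b_all (fun j => S2 i j)).
have Hmum : \sum_i mu i = \sum_j cs S1 j.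
  by rewrite /cs exchange_big /=; apply: eq_bigr => i _; rewrite -Hmu.
have Hka : \sum_j (m - nu j) = \sum_i (n - rs S2 i).
  rewrite (eq_bigr _ (fun j _ => Hcomp j)) exchange_big /=.
  by apply: eq_bigr => i _; rewrite Hrow.
have Hrn : \sum_i (n - rs S2 i) + \sum_i rs S2 i = m * n.
  have cst : \sum_(i < m) n = m * n by rewrite big_const_ord iter_addn_0 mulnC.
  rewrite -big_split /= -cst; apply: eq_bigr => i _.
  have : rs S2 i <= n by rewrite /rs -[X in _ <= X]sum1_ord; apply: leq_sum => j _; case: (S2 i j).
  lia.
have Htot : \sum_j cs S1 j + \sum_i rs S2 i = m * n.
  have [Hs _] := sumv HPC (leqnn (m + n)).
  have e1 : \sum_(j | acs S1 j <= m + n) acs S1 j = tri n + \sum_j cs S1 j.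
    rewrite (eq_bigl xpredT) /=; last by move=> j; rewrite (acs_bound HPC).
    by rewrite /acs big_split.
  have e2 : \sum_(i | ars S2 i <= m + n) ars S2 i = tri m + \sum_i rs S2 i.
    rewrite (eq_bigl xpredT) /=; last by move=> i; rewrite (ars_bound HPC).
    by rewrite /ars big_split.
  move: Hs; rewrite e1 e2 addnC triD; lia.
split; first by rewrite Hmum Hka; lia.
move=> J.
set q := #|J|.
have hq : q <= n by apply: leq_trans (max_card _) _; rewrite card_ord.
pose fa v := #|[set j | acs S1 j <= v]|.
pose fb v := #|[set i | ars S2 i <= v]|.
have fan : forall v, fa v <= n by move=> v; apply: leq_trans (max_card _) _; rewrite card_ord.
have fbm : forall v, fb v <= m by move=> v; apply: leq_trans (max_card _) _; rewrite card_ord.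
have [v hv fv] : exists2 v, v <= m + n & fa v = q.
  apply: ivt.
  - apply/eqP; rewrite cards_eq0; apply/eqP/setP => j; rewrite !inE /acs.
    by rewrite leqn0 addSn.
  - have [_ h] := sumv HPC (leqnn (m + n)).
    have aux4 : forall a b : nat, a + b = m + n -> b <= m -> q <= a by move=> *; lia.
    exact: aux4 h (fbm (m + n)).
  - move=> w hw; have [_ h1] := sumv HPC (ltnW hw); have [_ h2] := sumv HPC hw.
    have : fb w <= fb w.+1.
      by apply: subset_leq_card; apply/subsetP => i; rewrite !inE => /leqW.
    rewrite /fa /fb in h1 h2 *; lia.
set L := [set j | acs S1 j <= v].
set T := [set i | ars S2 i <= v].
have [Hs Hc] := sumv HPC hv.
rewrite -/L -/T in Hc.
have eL : \sum_(j | acs S1 j <= v) acs S1 j = \sum_(j in L) j.+1 + \sum_(j in L) cs S1 j.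
  by rewrite -big_split /=; apply: eq_bigl => j; rewrite inE.
have eT : \sum_(i | ars S2 i <= v) ars S2 i = \sum_(i in T) i.+1 + \sum_(i in T) rs S2 i.
  by rewrite -big_split /=; apply: eq_bigl => i; rewrite inE.
have dL := sum_distinct L.
have dT := sum_distinct T.
have fq : #|L| = q := fv.
rewrite fq in dL.
have ev : v = q + #|T| by rewrite -Hc fq.
rewrite eL eT ev triD in Hs.
have key : \sum_(j in L) cs S1 j + \sum_(i in T) rs S2 i <= q * #|T|.
  have aux5 : forall A B C D tq tp P : nat, A + B + (C + D) = tq + tp + P -> tq <= A -> tp <= C -> B + D <= P by move=> *; lia.
  exact: aux5 Hs dL dT.
have b2 : #|T| * q <= \sum_(i in T) (q - rs S2 i) + \sum_(i in T) rs S2 i.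
  by rewrite -big_split /= -sum_nat_const; apply: leq_sum => i _; lia.
have b1 : \sum_(i in T) (q - rs S2 i) <= \sum_i (q - rs S2 i) := sum_in_le _ _.
have a1 : \sum_i (mu i - (n - q)) <= \sum_(j in L) cs S1 j.
  rewrite /cs exchange_big /=; apply: leq_sum => i _.
  rewrite -Hmu /rs (bigID (fun j => j \in L)) /=.
  have : \sum_(j | ~~ (j \in L)) (S1 i j : nat) <= n - q.
    have cc := cardsC L; rewrite card_ord fq in cc.
    apply: (@leq_trans (\sum_(j in ~: L) 1)).
      rewrite big_mkcond [X in _ <= X]big_mkcond /=; apply: leq_sum => j _.
      by rewrite in_setC; case: (j \in L); case: (S1 i j).
    by rewrite sum1_card; lia.
  have aux2 : forall a b c d : nat, b <= d -> a + b - d <= a by move=> *; lia.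
  move=> h; apply: (aux2 _ _ 0); apply: leq_trans h; by apply: eq_leq; apply: eq_bigl.
have c1 : \sum_i (q - rs S2 i) <= \sum_(j in J) (m - nu j).
  rewrite (eq_bigr _ (fun j _ => Hcomp j)) exchange_big /=; apply: leq_sum => i _.
  have h1 := sum_b_set J (fun j => S2 i j).
  have h2 : \sum_(j in J) (S2 i j : nat) <= rs S2 i := sum_in_le _ _.
  have aux3 : forall a b c d : nat, a + b = q -> a <= d -> q - d <= b by move=> *; lia.
  exact: aux3 h1 h2.
rewrite -/q; lia.
Qed.

Theorem mainTheorem10 (m n : nat) (mu : 'I_m -> nat) (nu : 'I_n -> nat) :
  (exists S1 S2 : bmx m n, syl_rep mu nu S1 S2) ->
  exists R : bmx m n, res_rep mu nu R.
Proof.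
case=> S1 [S2 H].
have [Hs HJ] := cond H.
have [R [HR1 HR2]] := GR Hs HJ.
exists R; split => // j.
case: H => _ [Hnu _].
have hle : nu j <= m.
  by rewrite -Hnu /cs -[X in _ <= X]sum1_ord; apply: leq_sum => i _; case: (S2 i j).
have h := sum_b_all (fun i => R i j).
have e : cs (compl_mx R) j = \sum_i (~~ R i j : nat).
  by apply: eq_bigr => i _; rewrite /compl_mx mxE.
rewrite e.
have e2 : \sum_i (R i j : nat) = m - nu j by rewrite -HR2.
have aux : forall a b c : nat, a + b = m -> a = m - c -> c <= m -> b = c by move=> *; lia.
exact: aux h e2 hle.
Qed.
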